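(* Let solutions $\psi_n$ of the KG equation concentrate at the trajectory $\hat{\mathbf r}$. Then the adjacent ergocenters $\mathbf r_n(t)$ of the solutions converge to $\hat{\mathbf r}(t)$ uniformly on $[T_-,T_+]$.
   Context: Fix constants $c>0$, $m>0$ and a real charge $q$. For parameters $\chi>0$, $a>0$ and a real electric potential $\varphi(t,\mathbf x)$, the KG equation is $-c^{-2}\tilde\partial_t^2\psi+\Delta\psi-G_a'(|\psi|^2)\psi-\kappa_0^2\psi=0$, $\tilde\partial_t=\partial_t+\mathrm i q\varphi/\chi$, $\kappa_0=mc/\chi$, with $G_a(s)=a^{-5}G_1(a^3s)$, where $G_1(0)=0$, $G_1'\in C^1((0,\infty))$, $\psi\mapsto G_1'(|\psi|^2)\psi$ extends to a $C^\alpha(\mathbb C)$ function and $\psi\mapsto G_1(|\psi|^2)$ is $C^{1+\alpha}(\mathbb C)$ for every $\alpha\in(0,1)$, with $|G_1(|\psi|^2)|\le C|\psi|^{1+\alpha}$, $|G_1'(|\psi|^2)||\psi|\le C|\psi|^\alpha$ for bounded $|\psi|$. $a_C=\chi/(mc)$. Energy density $\mathcal E=\frac{\chi^2}{2m}[c^{-2}|\tilde\partial_t\psi|^2+|\nabla\psi|^2+G_a(|\psi|^2)+\kappa_0^2|\psi|^2]$. $\nabla_{0,\mathbf x}=(c^{-1}\partial_t,\partial_1,\partial_2,\partial_3)$. Trajectory: $\hat{\mathbf r}\in C^2([T_-,T_+];\mathbb R^3)$ with $|\partial_t\hat{\mathbf r}|,|\partial_t^2\hat{\mathbf r}|\le C$;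 $R_n\to0$; $\Omega_n(t)=\{|\mathbf x-\hat{\mathbf r}(t)|\le R_n\}$, $\hat\Omega_n=\{(t,\mathbf x):t\in[T_-,T_+],\mathbf x\in\Omega_n(t)\}$. Localized KG equations: $a_n\to0$, $\chi_n\to0$, $a_{C,n}/a_n\le C$, $R_n/a_n\to\infty$; $\varphi_n\in C^2(\hat\Omega_n)$ with $\sup_{\hat\Omega_n}(|\varphi_n|+|\nabla_{0,\mathbf x}\varphi_n|)\le C$; a limit $\varphi_\infty(t,\mathbf x)=\varphi_\infty(t,\hat{\mathbf r}(t))+(\mathbf x-\hat{\mathbf r}(t))\cdot\nabla\varphi_\infty(t)$ with $\sup_{\hat\Omega_n}(|\varphi_n-\varphi_\infty|+|\nabla_{0,\mathbf x}(\varphi_n-\varphi_\infty)|)\to0$ and $|\varphi_\infty(t,\hat{\mathbf r}(t))|,|\nabla\varphi_\infty(t)|,|\partial_t\nabla\varphi_\infty(t)|\le C$. Concentrating solutions: $\psi_n\in C^2(\hat\Omega_n)$ solving KG with $(\chi_n,a_n,\varphi_n)$ in $\hat\Omega_n$ such that (i) $\max_t\int_{\Omega_n(t)}[a_C^2|\nabla_{0,\mathbf x}\psi_n|^2+a_C^2|G_a(|\psi_n|^2)|+|\psi_n|^2]d^3x\le C$; (ii) $\max_t\int_{\partial\Omega_n(t)}[\text{same integrand}]d^2\sigma\to0$; (iii) $\bar{\mathcal E}_n(t)=\int_{\Omega_n(t)}\mathcal E_nd^3x\ge c_0>0$ for $n\ge n_0$; (iv) $\bar{\mathcal E}_n(t_0)$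 converges for some $t_0$. Adjacent ergocenter: $\mathbf r_n(t)=\bar{\mathcal E}_n(t)^{-1}\int_{\Omega_n(t)}\mathbf x\,\mathcal E_n\,d^3x$. *)

(* Defs.v *)
From mathcomp Require Import all_boot all_algebra.
From mathcomp Require Import all_classical all_reals all_analysis.
From mathcomp Require Export complex.
Import GRing.Theory Num.Theory numFieldTopology.Exports numFieldNormedType.Exports.

Set Implicit Arguments.
Unset Strict Implicit.
Unset Printing Implicit Defensive.

Local Open Scope ring_scope.
Local Open Scope complex_scope.
Local Open Scope classical_set_scope.

Notation R3 R := (R * R * R)%type.

Definition x1 {R : realType} (x : R3 R) : R := x.1.1.
Definition x2 {R : realType} (x : R3 R) : R := x.1.2.
Definition x3 {R : realType} (x : R3 R) : R := x.2.

Definition coord3 {R : realType} (i : nat) (x : R3 R) : R :=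
  match i with 0%N => x1 x | 1%N => x2 x | _ => x3 x end.

Definition upd3 {R : realType} (i : nat) (x : R3 R) (s : R) : R3 R :=
  match i with
  | 0%N => (s, x2 x, x3 x)
  | 1%N => (x1 x, s, x3 x)
  | _ => (x1 x, x2 x, s)
  end.

Definition sub3 {R : realType} (x y : R3 R) : R3 R :=
  (x1 x - x1 y, x2 x - x2 y, x3 x - x3 y).

Definition dot3 {R : realType} (x y : R3 R) : R :=
  x1 x * x1 y + x2 x * x2 y + x3 x * x3 y.

Definition norm3 {R : realType} (x : R3 R) : R := Num.sqrt (dot3 x x).

Definition cball3 {R : realType} (c : R3 R) (r : R) : set (R3 R) :=
  [set x | norm3 (sub3 x c) <= r].

Definition leb3 (R : realType) :=
  ((@lebesgue_measure R) \x (@lebesgue_measure R) \x (@lebesgue_measure R))%E.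

Definition vint3 {R : realType} (A : set (R3 R)) (f : R3 R -> R) : R :=
  Rintegral (@leb3 R) A f.

Definition sph3 {R : realType} (c : R3 R) (r th ph : R) : R3 R :=
  (x1 c + r * sin th * cos ph, x2 c + r * sin th * sin ph, x3 c + r * cos th).

(* surface integral over the sphere |x - c| = r (surface measure d^2 sigma),
   via the spherical parametrisation: d^2 sigma = r^2 sin th dth dph *)
Definition sint3 {R : realType} (c : R3 R) (r : R) (g : R3 R -> R) : R :=
  Rintegral ((@lebesgue_measure R) \x (@lebesgue_measure R))%E
    (`[0, pi] `*` `[0, 2 * pi])
    (fun p => g (sph3 c r p.1 p.2) * r ^+ 2 * sin p.1).

Definition cnorm2 {R : realType} (z : R[i]) : R :=
  complex.Re z ^+ 2 + complex.Im z ^+ 2.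
Definition cabs {R : realType} (z : R[i]) : R := Num.sqrt (cnorm2 z).

(* real-valued fields f(t,x); k = 0 is time, k = 1,2,3 the space variables *)
Definition pdf {R : realType} (k : nat) (f : R -> R3 R -> R) (t : R) (x : R3 R) : R :=
  match k with
  | 0%N => derive1 (fun s => f s x) t
  | S i => derive1 (fun s => f t (upd3 i x s)) (coord3 i x)
  end.

Definition pdable {R : realType} (k : nat) (f : R -> R3 R -> R) (t : R) (x : R3 R) : Prop :=
  match k with
  | 0%N => derivable (fun s => f s x) t 1
  | S i => derivable (fun s => f t (upd3 i x s)) (coord3 i x) 1
  end.

Definition C1_on {R : realType} (S : set (R * R3 R)) (f : R -> R3 R -> R) : Prop :=
  {within S, continuous (fun p => f p.1 p.2)} /\
  forall k, (k < 4)%N ->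
    (forall p, S p -> pdable k f p.1 p.2) /\
    {within S, continuous (fun p => pdf k f p.1 p.2)}.

Definition C2_on {R : realType} (S : set (R * R3 R)) (f : R -> R3 R -> R) : Prop :=
  C1_on S f /\ forall k, (k < 4)%N -> C1_on S (pdf k f).

Definition reF {R : realType} (psi : R -> R3 R -> R[i]) : R -> R3 R -> R :=
  fun t x => complex.Re (psi t x).
Definition imF {R : realType} (psi : R -> R3 R -> R[i]) : R -> R3 R -> R :=
  fun t x => complex.Im (psi t x).

Definition cpd {R : realType} (k : nat) (psi : R -> R3 R -> R[i]) : R -> R3 R -> R[i] :=
  fun t x => (pdf k (reF psi) t x) +i* (pdf k (imF psi) t x).

Definition cC2_on {R : realType} (S : set (R * R3 R)) (psi : R -> R3 R -> R[i]) : Prop :=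
  C2_on S (reF psi) /\ C2_on S (imF psi).

Definition grad_sq {R : realType} (psi : R -> R3 R -> R[i]) (t : R) (x : R3 R) : R :=
  cnorm2 (cpd 1 psi t x) + cnorm2 (cpd 2 psi t x) + cnorm2 (cpd 3 psi t x).

Definition grad0_sq {R : realType} (c : R) (psi : R -> R3 R -> R[i]) (t : R) (x : R3 R) : R :=
  c ^-2 * cnorm2 (cpd 0 psi t x) + grad_sq psi t x.

Definition grad0_norm {R : realType} (c : R) (f : R -> R3 R -> R) (t : R) (x : R3 R) : R :=
  Num.sqrt (c ^-2 * pdf 0 f t x ^+ 2 + pdf 1 f t x ^+ 2 + pdf 2 f t x ^+ 2
            + pdf 3 f t x ^+ 2).

Definition lapl {R : realType} (psi : R -> R3 R -> R[i]) : R -> R3 R -> R[i] :=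
  fun t x => cpd 1 (cpd 1 psi) t x + cpd 2 (cpd 2 psi) t x + cpd 3 (cpd 3 psi) t x.

Definition covdt {R : realType} (q chi : R) (phi : R -> R3 R -> R)
  (psi : R -> R3 R -> R[i]) : R -> R3 R -> R[i] :=
  fun t x => cpd 0 psi t x + 'i * ((q * phi t x / chi)%:C) * psi t x.

Definition Ga {R : realType} (G1 : R -> R) (a s : R) : R := a ^-5 * G1 (a ^+ 3 * s).

(* G_a'(|psi|^2) psi, with G_a'(s) = a^-2 G_1'(a^3 s); at psi = 0 it is given
   its continuous extension, which is 0 *)
Definition NLa {R : realType} (dG1 : R -> R) (a : R) (z : R[i]) : R[i] :=
  if z == 0 then 0 else ((a ^-2 * dG1 (a ^+ 3 * cnorm2 z))%:C) * z.

Definition NL1 {R : realType} (dG1 : R -> R) (z : R[i]) : R[i] :=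
  (dG1 (cnorm2 z))%:C * z.

Definition loc_holder_c {R : realType} (al : R) (F : R[i] -> R[i]) : Prop :=
  forall M : R, 0 < M -> exists K : R, forall z w : R[i],
    cabs z <= M -> cabs w <= M -> cabs (F z - F w) <= K * powR (cabs (z - w)) al.

Definition loc_holder_r {R : realType} (al : R) (F : R[i] -> R) : Prop :=
  forall M : R, 0 < M -> exists K : R, forall z w : R[i],
    cabs z <= M -> cabs w <= M -> `|F z - F w| <= K * powR (cabs (z - w)) al.

Definition dRe {R : realType} (H : R[i] -> R) (z : R[i]) : R :=
  derive1 (fun s => H (s +i* complex.Im z)) (complex.Re z).
Definition dIm {R : realType} (H : R[i] -> R) (z : R[i]) : R :=
  derive1 (fun s => H (complex.Re z +i* s)) (complex.Im z).

Definition C1alpha_c {R : realType} (al : R) (H : R[i] -> R) : Prop :=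
  (forall z : R[i], derivable (fun s => H (s +i* complex.Im z)) (complex.Re z) 1 /\
                    derivable (fun s => H (complex.Re z +i* s)) (complex.Im z) 1) /\
  loc_holder_r al (dRe H) /\ loc_holder_r al (dIm H).

Definition G1_hyp {R : realType} (G1 dG1 : R -> R) : Prop :=
  G1 0 = 0 /\
  (forall s : R, 0 < s -> is_derive s 1 G1 (dG1 s)) /\
  (forall s : R, 0 < s -> derivable dG1 s 1 /\ {for s, continuous (derive1 dG1)}) /\
  (forall al : R, 0 < al < 1 ->
     (exists F : R[i] -> R[i], loc_holder_c al F /\
        forall z : R[i], z != 0 -> F z = NL1 dG1 z) /\
     C1alpha_c al (fun z => G1 (cnorm2 z)) /\
     (forall M : R, 0 < M -> exists C : R, forall z : R[i], cabs z <= M ->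
        `|G1 (cnorm2 z)| <= C * powR (cabs z) (1 + al) /\
        (z != 0 -> `|dG1 (cnorm2 z)| * cabs z <= C * powR (cabs z) al))).

Definition KG_op {R : realType} (c m q : R) (dG1 : R -> R) (chi a : R)
  (phi : R -> R3 R -> R) (psi : R -> R3 R -> R[i]) (t : R) (x : R3 R) : R[i] :=
  let kappa0 := m * c / chi in
  - ((c ^-2)%:C) * covdt q chi phi (covdt q chi phi psi) t x
  + lapl psi t x - NLa dG1 a (psi t x) - ((kappa0 ^+ 2)%:C) * psi t x.

Definition edens {R : realType} (c m q : R) (G1 : R -> R) (chi a : R)
  (phi : R -> R3 R -> R) (psi : R -> R3 R -> R[i]) (t : R) (x : R3 R) : R :=
  let kappa0 := m * c / chi in
  chi ^+ 2 / (2 * m) *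
  (c ^-2 * cnorm2 (covdt q chi phi psi t x) + grad_sq psi t x
   + Ga G1 a (cnorm2 (psi t x)) + kappa0 ^+ 2 * cnorm2 (psi t x)).

Definition conc_dens {R : realType} (c m : R) (G1 : R -> R) (chi a : R)
  (psi : R -> R3 R -> R[i]) (t : R) (x : R3 R) : R :=
  let aC := chi / (m * c) in
  aC ^+ 2 * grad0_sq c psi t x + aC ^+ 2 * `|Ga G1 a (cnorm2 (psi t x))|
  + cnorm2 (psi t x).

Definition vder {R : realType} (r : R -> R3 R) (t : R) : R3 R :=
  (derive1 (fun s => x1 (r s)) t, derive1 (fun s => x2 (r s)) t,
   derive1 (fun s => x3 (r s)) t).

Definition vderivable {R : realType} (r : R -> R3 R) (t : R) : Prop :=
  derivable (fun s => x1 (r s)) t 1 /\ derivable (fun s => x2 (r s)) t 1 /\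
  derivable (fun s => x3 (r s)) t 1.

Definition vC2_on {R : realType} (a b : R) (r : R -> R3 R) : Prop :=
  (forall t, a <= t <= b -> vderivable r t /\ vderivable (vder r) t) /\
  {within `[a, b], continuous (vder (vder r))}.

Definition tube {R : realType} (Tm Tp : R) (rh : R -> R3 R) (Rn : R) : set (R * R3 R) :=
  [set p | Tm <= p.1 <= Tp /\ cball3 (rh p.1) Rn p.2].

Definition Ebar {R : realType} (c m q : R) (G1 : R -> R) (chi a : R)
  (phi : R -> R3 R -> R) (psi : R -> R3 R -> R[i]) (rh : R -> R3 R) (Rn t : R) : R :=
  vint3 (cball3 (rh t) Rn) (edens c m q G1 chi a phi psi t).

Definition ergocenter {R : realType} (c m q : R) (G1 : R -> R) (chi a : R)
  (phi : R -> R3 R -> R) (psi : R -> R3 R -> R[i]) (rh : R -> R3 R) (Rn t : R) : R3 R :=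
  let E := Ebar c m q G1 chi a phi psi rh Rn t in
  let e := edens c m q G1 chi a phi psi t in
  (E^-1 * vint3 (cball3 (rh t) Rn) (fun x => x1 x * e x),
   E^-1 * vint3 (cball3 (rh t) Rn) (fun x => x2 x * e x),
   E^-1 * vint3 (cball3 (rh t) Rn) (fun x => x3 x * e x)).

(* phi_infinity(t,x) = phi_inf(t, rh t) + (x - rh t) . grad phi_inf(t),
   parametrised by phi0(t) = phi_inf(t, rh t) and gphi(t) = grad phi_inf(t) *)
Definition phi_inf {R : realType} (rh : R -> R3 R) (phi0 : R -> R) (gphi : R -> R3 R)
  : R -> R3 R -> R :=
  fun t x => phi0 t + dot3 (sub3 x (rh t)) (gphi t).

(* Main.v *)
Require Import Defs.
From mathcomp Require Import all_boot all_algebra.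
From mathcomp Require Import all_classical all_reals all_analysis.
From mathcomp Require Import complex.
From mathcomp Require Import all_order.
From mathcomp Require Import ring lra.
Import GRing.Theory Num.Theory numFieldTopology.Exports numFieldNormedType.Exports.
Import Order.TTheory.
Local Open Scope ring_scope.
Local Open Scope classical_set_scope.


Definition qbox {R : realType} (q : rat * rat * rat) (k : nat) : set (R3 R) :=
  (ball (ratr q.1.1 : R) (k.+1%:R^-1) `*` ball (ratr q.1.2 : R) (k.+1%:R^-1))
   `*` ball (ratr q.2 : R) (k.+1%:R^-1).

Lemma qbox_measurable {R : realType} q k : measurable (@qbox R q k).
Proof. by apply: measurableX; [apply: measurableX|]; exact: measurable_realfun.measurable_ball. Qed.

Lemma rat_near {R : realType} (x r : R) : 0 < r -> exists q : rat, `|ratr q - x| < r.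
Proof.
move=> r0; have : x - r < x + r by rewrite ltrD2l gtrN.
move=> /rat_in_itvoo [q]; rewrite in_itv /= => /andP[h1 h2].
exists q; rewrite ltr_norml; apply/andP; split; lra.
Qed.

Lemma open3_measurable {R : realType} (U : set (R3 R)) : open U -> measurable U.
Proof.
move=> oU.
pose F (n : nat) : set (R3 R) := match unpickle n : option (rat * rat * rat * nat) with
  | Some (q, k) => if `[< qbox q k `<=` U >] then qbox q k else set0
  | None => set0 end.
have -> : U = \bigcup_n F n.
  apply/seteqP; split; last first.
    move=> x [n _]; rewrite /F; case: unpickle => [[q k]|] //.
    by case: asboolP => // H /H.
  move=> x Ux.
  have := oU x Ux; rewrite /= => /nbhs_ballP [e e0 He].
  pose k := Num.trunc (2 / e).
  have hk : (k.+1%:R : R)^-1 < e / 2.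
    have e0' : 0 < e := e0.
    rewrite invf_plt; last 2 first.
      - by rewrite posrE ltr0n.
      - by rewrite posrE divr_gt0.
    by rewrite invf_div; have := truncnS_gt (2 / e).
  have r0 : 0 < (k.+1%:R : R)^-1 by rewrite invr_gt0 ltr0n.
  have [q1 h1] := @rat_near _ x.1.1 _ r0.
  have [q2 h2] := @rat_near _ x.1.2 _ r0.
  have [q3 h3] := @rat_near _ x.2 _ r0.
  exists (pickle ((q1, q2, q3), k)); first by [].
  have sub : qbox (q1, q2, q3) k `<=` U.
    move=> y [[/= y1 y2] y3]; apply: He.
    have key : forall (a b c : R), `|c - a| < (k.+1%:R)^-1 -> `|c - b| < (k.+1%:R)^-1 ->
        `|a - b| < e.
      move=> a b c ha hb.
      have e0' : 0 < e := e0.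
      have : `|a - b| <= `|c - a| + `|c - b|.
        have -> : a - b = (c - b) - (c - a) by ring.
        by rewrite [X in _ <= X]addrC; apply: ler_normB.
      move: hk ha hb; set K := (k.+1%:R)^-1; move=> hk ha hb hab. lra.
    split; [split|]; rewrite /ball /=.
    - exact: key h1 y1.
    - exact: key h2 y2.
    - exact: key h3 y3.
  rewrite /F pickleK /= asboolT //.
apply: bigcupT_measurable => n; rewrite /F.
case: unpickle => [[q k]|] //.
by case: asboolP => _ //; exact: qbox_measurable.
Qed.

Definition wc {R : realType} {T : pseudoMetricType R} (A : set T) (f : T -> R) :=
  forall x, A x -> forall e : R, 0 < e -> exists2 d : R, 0 < d &
    forall y, A y -> ball x d y -> `|f x - f y| < e.

Lemma wc_within {R : realType} {T : pseudoMetricType R} (A : set T) (f : T -> R) :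
  wc A f -> {within A, continuous f}.
Proof.
move=> wf; apply/subspace_continuousP => x Ax P /nbhs_ballP [e e0 HP].
have [d d0 Hd] := wf x Ax e e0.
rewrite /= nbhs_simpl /within /=; apply/nbhs_ballP; exists d => // y xy Ay.
by apply: HP; rewrite /ball /=; exact: Hd.
Qed.

Lemma within_wc {R : realType} {T : pseudoMetricType R} (A : set T) (f : T -> R) :
  {within A, continuous f} -> wc A f.
Proof.
move=> /subspace_continuousP H x Ax e e0.
have := H x Ax (ball (f x) e) (nbhsx_ballx _ _ e0).
rewrite /= nbhs_simpl /within /= => /nbhs_ballP [d d0 Hd].
exists d => // y Ay bxy.
have := Hd y bxy Ay.
by rewrite /ball /=.
Qed.

Lemma c1_cont (R : realType) : continuous (fun x : R3 R => x.1).
Proof. move=> x; exact: cvg_fst. Qed.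
Lemma c2_cont (R : realType) : continuous (fun x : R3 R => x.2).
Proof. move=> x; exact: cvg_snd. Qed.
Lemma c11_cont (R : realType) : continuous (fun x : R3 R => x.1.1).
Proof. move=> x; apply: continuous_comp; [exact: c1_cont|exact: cvg_fst]. Qed.
Lemma c12_cont (R : realType) : continuous (fun x : R3 R => x.1.2).
Proof. move=> x; apply: continuous_comp; [exact: c1_cont|exact: cvg_snd]. Qed.

Lemma norm3_cont {R : realType} (c : R3 R) : continuous (fun x : R3 R => norm3 (sub3 x c)).
Proof.
move=> x; rewrite /norm3.
apply: (continuous_comp (f := fun x => dot3 (sub3 x c) (sub3 x c))); last first.
  exact: sqrt_continuous.
rewrite /dot3 /sub3 /x1 /x2 /x3 /=.
apply: continuousD; [apply: continuousD|]; apply: continuousM; apply: continuousB;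
  (exact: c11_cont || exact: c12_cont || exact: c2_cont || exact: cst_continuous).
Qed.

Lemma cball3_closed {R : realType} (c : R3 R) r : closed (cball3 c r).
Proof.
apply: (@preimage_closed _ _ (fun x : R3 R => norm3 (sub3 x c)) [set s | s <= r]).
  by move=> y _; exact: norm3_cont.
exact: closed_le.
Qed.

Lemma sqr_le_sqrt {R : realType} (a s : R) : a ^+ 2 <= s -> `|a| <= Num.sqrt s.
Proof.
by move=> h; rewrite -sqrtr_sqr; apply: ler_wsqrtr.
Qed.

Lemma coord_le_norm3 {R : realType} (v : R3 R) :
  `|x1 v| <= norm3 v /\ `|x2 v| <= norm3 v /\ `|x3 v| <= norm3 v.
Proof.
rewrite /norm3 /dot3; split; [|split]; apply: sqr_le_sqrt;
  set a := x1 v; set b := x2 v; set c := x3 v; nra.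
Qed.

Lemma cball3_compact {R : realType} (c : R3 R) r : compact (cball3 c r).
Proof.
apply: (@subclosed_compact _ _
  ((`[x1 c - r, x1 c + r] `*` `[x2 c - r, x2 c + r]) `*` `[x3 c - r, x3 c + r])).
- exact: cball3_closed.
- apply: compact_setX; [apply: compact_setX|]; exact: segment_compact.
- move=> x; rewrite /cball3 /= => hx.
  have [h1 [h2 h3]] := coord_le_norm3 (sub3 x c).
  move: h1 h2 h3; rewrite /sub3 /x1 /x2 /x3 /= => h1 h2 h3.
  have H : forall a b : R, `|a - b| <= r -> b - r <= a <= b + r.
    move=> a b; rewrite ler_norml => /andP[u v]; apply/andP; split; lra.
  split; [split|]; rewrite /= in_itv /=; apply: H.
  + exact: le_trans h1 hx.
  + exact: le_trans h2 hx.
  + exact: le_trans h3 hx.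
Qed.

Lemma wc_bounded {R : realType} (B : set (R3 R)) (f : R3 R -> R) :
  compact B -> wc B f -> exists M : R, forall x, B x -> `|f x| <= M.
Proof.
move=> cB wf.
have := compact_bounded (continuous_compact (wc_within B f wf) cB).
move=> [M [_ HM]]; exists (`|M| + 1) => x Bx.
apply: (HM (`|M| + 1)); last by exists x.
by rewrite (le_lt_trans (ler_norm M)) // ltrDl.
Qed.

Lemma wc_measurable {R : realType} (B : set (R3 R)) (f : R3 R -> R) :
  measurable B -> wc B f -> measurable_fun B f.
Proof.
move=> mB wf; apply: (measurability _ (measurable_realfun.RGenOInfty.measurableE R)).
move=> _ [_ [a ->] <-].
pose V := \bigcup_(p in [set p : R3 R * R | 0 < p.2 /\
             (forall z, B z -> ball p.1 p.2 z -> a < f z)]) ball p.1 p.2.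
have -> : B `&` f @^-1` `]a, +oo[ = B `&` V.
  apply/seteqP; split => y [By].
    rewrite /= in_itv /= andbT => ay; split => //.
    have [d d0 Hd] := wf y By (f y - a) (ltac:(by rewrite subr_gt0)).
    exists (y, d) => /=; last exact: ballxx.
    split => // z Bz yz; have := Hd z Bz yz.
    rewrite ltr_norml => /andP[_]; lra.
  move=> [[x d] /= [d0 H] xy]; split => //.
  by rewrite /= in_itv /= andbT; exact: H.
apply: measurableI => //; apply: open3_measurable.
by apply: bigcup_open => p _; exact: ball_open.
Qed.

Lemma cball3_sub_box {R : realType} (c : R3 R) r :
  cball3 c r `<=`
  ((`[x1 c - r, x1 c + r] `*` `[x2 c - r, x2 c + r]) `*` `[x3 c - r, x3 c + r]).
Proof.
move=> x; rewrite /cball3 /= => hx.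
have [h1 [h2 h3]] := coord_le_norm3 (sub3 x c).
move: h1 h2 h3; rewrite /sub3 /x1 /x2 /x3 /= => h1 h2 h3.
have H : forall a b : R, `|a - b| <= r -> b - r <= a <= b + r.
  move=> a b; rewrite ler_norml => /andP[u v]; apply/andP; split; lra.
split; [split|]; rewrite /= in_itv /=; apply: H.
+ exact: le_trans h1 hx.
+ exact: le_trans h2 hx.
+ exact: le_trans h3 hx.
Qed.

Lemma cball3_measurable {R : realType} (c : R3 R) r : measurable (cball3 c r).
Proof.
rewrite -[cball3 c r]setCK; apply: measurableC; apply: open3_measurable.
exact: closed_openC (cball3_closed c r).
Qed.

Lemma box_fin {R : realType} (a1 b1 a2 b2 a3 b3 : R) :
  (leb3 ((`[a1, b1] `*` `[a2, b2]) `*` `[a3, b3]) < +oo)%E.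
Proof.
rewrite /leb3 product_measure1E //; last by apply: measurableX.
set m12 := (X in (X * _)%E).
have -> : m12 = (lebesgue_measure `[a1, b1] * lebesgue_measure `[a2, b2])%E.
  exact: product_measure1E.
set m3 := (X in (_ * X)%E).
have -> : m3 = lebesgue_measure `[a3, b3] by [].
rewrite !lebesgue_measure_itv /=.
by repeat case: ifP => _; rewrite -?EFinD -?EFinM ?ltry.
Qed.

Lemma cball3_fin {R : realType} (c : R3 R) r : (leb3 (cball3 c r) < +oo)%E.
Proof.
have h := box_fin (x1 c - r) (x1 c + r) (x2 c - r) (x2 c + r) (x3 c - r) (x3 c + r).
have hm : measurable ((`[x1 c - r, x1 c + r] `*` `[x2 c - r, x2 c + r]) `*`
     `[x3 c - r, x3 c + r] : set (R3 R)).
  by apply: measurableX; [apply: measurableX|].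
have s := @le_measure _ _ _ (@leb3 R) (cball3 c r) _ (mem_set (cball3_measurable c r))
  (mem_set hm) (cball3_sub_box c r).
exact: (le_lt_trans s h).
Qed.

Lemma G1_meas {R : realType} (G1 dG1 : R -> R) : G1_hyp G1 dG1 ->
  measurable_fun (`[0, +oo[ : set R) G1.
Proof.
move=> [_ [hd _]].
have -> : `[0, +oo[ = [set 0] `|` `]0, +oo[ :> set R.
  apply/seteqP; split => s; rewrite /= !in_itv /= !andbT.
    by rewrite le_eqVlt => /orP[/eqP <-|->]; [left|right].
  by move=> [->//|/ltW].
apply/measurable_funU => //; split; first exact: measurable_fun_set1.
apply: measurable_realfun.subspace_continuous_measurable_fun => //.
apply: derivable_within_continuous => s; rewrite in_itv /= andbT => s0.
by have [] := hd s s0.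
Qed.

Lemma cnorm2_cpd {R : realType} k (ps : R -> R3 R -> R[i]) t x :
  cnorm2 (cpd k ps t x) = pdf k (reF ps) t x ^+ 2 + pdf k (imF ps) t x ^+ 2.
Proof. by []. Qed.

Lemma cnorm2_psi {R : realType} (ps : R -> R3 R -> R[i]) t x :
  cnorm2 (ps t x) = reF ps t x ^+ 2 + imF ps t x ^+ 2.
Proof. by []. Qed.

Lemma cnorm2_covdt {R : realType} q chi (phi : R -> R3 R -> R) (ps : R -> R3 R -> R[i]) t x :
  cnorm2 (covdt q chi phi ps t x) =
  (pdf 0 (reF ps) t x - q * phi t x / chi * imF ps t x) ^+ 2 +
  (pdf 0 (imF ps) t x + q * phi t x / chi * reF ps t x) ^+ 2.
Proof.
rewrite /covdt /cnorm2 /cpd /reF /imF; case: (ps t x) => u v /=.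
ring.
Qed.

Lemma slice_wc {R : realType} (Tm Tp : R) (rh : R -> R3 R) (r : R)
  (F : R -> R3 R -> R) t :
  {within tube Tm Tp rh r, continuous (fun p => F p.1 p.2)} -> Tm <= t <= Tp ->
  wc (cball3 (rh t) r) (F t).
Proof.
move=> /within_wc H ht x Bx e e0.
have [d d0 Hd] := H (t, x) (conj ht Bx) e e0.
exists d => // y By xy.
have := Hd (t, y) (conj ht By); apply.
by split => //=; exact: ballxx.
Qed.

Definition mb {R : realType} (B : set (R3 R)) (f : R3 R -> R) :=
  measurable_fun B f /\ exists M : R, forall x, B x -> `|f x| <= M.

Lemma mb_cst {R : realType} (B : set (R3 R)) (k : R) : mb B (fun _ => k).
Proof. by split; [exact: measurable_cst|exists `|k|]. Qed.

Lemma mb_add {R : realType} {B : set (R3 R)} {f g : R3 R -> R} : mb B f -> mb B g ->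
  mb B (fun x => f x + g x).
Proof.
move=> [mf [M hM]] [mg [N hN]]; split.
  exact: measurable_realfun.measurable_funD.
exists (M + N) => x Bx; apply: le_trans (ler_normD _ _) _.
by apply: lerD; [exact: hM|exact: hN].
Qed.

Lemma mb_mul {R : realType} {B : set (R3 R)} {f g : R3 R -> R} : mb B f -> mb B g ->
  mb B (fun x => f x * g x).
Proof.
move=> [mf [M hM]] [mg [N hN]]; split.
  exact: measurable_realfun.measurable_funM.
exists (M * N) => x Bx; rewrite normrM.
apply: ler_pM => //; [exact: hM|exact: hN].
Qed.

Lemma mb_eq {R : realType} {B : set (R3 R)} {f : R3 R -> R} (g : R3 R -> R) : (forall x, B x -> f x = g x) ->
  mb B f -> mb B g.
Proof.
move=> fg [mf [M hM]]; split.
  by apply: eq_measurable_fun mf => x; rewrite inE => Bx; exact: fg.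
by exists M => x Bx; rewrite -fg //; exact: hM.
Qed.

Lemma mb_opp {R : realType} {B : set (R3 R)} {f : R3 R -> R} : mb B f -> mb B (fun x => - f x).
Proof.
move=> hf; apply: (mb_eq _ _ (mb_mul (mb_cst B (-1)) hf)) => x _.
by rewrite mulN1r.
Qed.

Lemma mb_abs {R : realType} {B : set (R3 R)} {f : R3 R -> R} : mb B f -> mb B (fun x => `|f x|).
Proof.
move=> [mf [M hM]]; split.
  by apply: measurableT_comp => //; exact: measurable_realfun.normr_measurable.
by exists M => x Bx; rewrite normr_id; exact: hM.
Qed.

Lemma mb_wc {R : realType} (B : set (R3 R)) f : measurable B -> compact B -> wc B f ->
  mb B f.
Proof.
move=> mB cB wf; split; first exact: wc_measurable.
exact: wc_bounded.
Qed.

Lemma mb_int {R : realType} {B : set (R3 R)} {f : R3 R -> R} : measurable B -> (leb3 B < +oo)%E ->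
  mb B f -> (@leb3 R).-integrable B (EFin \o f).
Proof.
move=> mB fB [mf [M hM]]; apply: measurable_bounded_integrable => //.
exists M; split; first exact: num_real.
move=> y My x Bx; exact: le_trans (hM x Bx) (ltW My).
Qed.

Lemma mb_sq {R : realType} {B : set (R3 R)} {f : R3 R -> R} : mb B f -> mb B (fun x => f x ^+ 2).
Proof. by move=> hf; apply: (mb_eq _ _ (mb_mul hf hf)) => x _; rewrite expr2. Qed.

Lemma mb_G1 {R : realType} (G1 dG1 : R -> R) (B : set (R3 R)) (N : R3 R -> R) (k : R) :
  G1_hyp G1 dG1 -> mb B N -> (forall x, B x -> 0 <= N x) -> 0 <= k ->
  mb B (fun x => G1 (k * N x)).
Proof.
move=> hG [mN [M hM]] N0 k0; split.
  apply: (measurable_comp (F := (`[0, +oo[ : set R))).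
  - exact: measurable_itv.
  - move=> _ [x Bx <-]; rewrite /= in_itv /= andbT.
    by apply: mulr_ge0 => //; exact: N0.
  - exact: G1_meas hG.
  - apply: measurable_realfun.measurable_funM => //; exact: measurable_cst.
have [_ [_ [_ H]]] := hG.
have [_ [_ hb]] := H (1 / 2) ltac:(apply/andP; split; lra).
have M1 : 0 < Num.sqrt (k * M) + 1 by apply: ltr_wpDl => //; exact: sqrtr_ge0.
have [C hC] := hb _ M1.
exists (`|C| * powR (Num.sqrt (k * M) + 1) (1 + 1 / 2)) => x Bx.
set s := k * N x.
have s0 : 0 <= s by apply: mulr_ge0 => //; exact: N0.
have sM : s <= k * M.
  apply: ler_wpM2l => //; apply: le_trans (hM x Bx); exact: ler_norm.
pose z : R[i] := ((Num.sqrt s)%:C)%C.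
have e1 : cnorm2 z = s by rewrite /cnorm2 /z /= expr0n /= addr0 sqr_sqrtr.
have e2 : cabs z = Num.sqrt s by rewrite /cabs e1.
have hz : cabs z <= Num.sqrt (k * M) + 1.
  rewrite e2; apply: le_trans (ler_wsqrtr sM) _; lra.
have [hG1 _] := hC z hz; rewrite e1 in hG1.
apply: le_trans hG1 _.
have P0 : 0 <= powR (cabs z) (1 + 1 / 2) by exact: powR_ge0.
apply: le_trans (ler_wpM2r P0 (ler_norm C)) _.
apply: ler_wpM2l => //.
apply: ge0_ler_powR => //.
- by rewrite nnegrE /cabs sqrtr_ge0.
- by rewrite nnegrE; lra.
Qed.

Lemma cnorm2_ge0 {R : realType} (z : R[i]) : 0 <= cnorm2 z.
Proof. by rewrite /cnorm2 addr_ge0 // sqr_ge0. Qed.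

Lemma mb_dens {R : realType} (c m q chi a : R) (G1 dG1 : R -> R)
  (phi : R -> R3 R -> R) (psi : R -> R3 R -> R[i]) t (B : set (R3 R)) :
  G1_hyp G1 dG1 -> 0 < a ->
  mb B (reF psi t) -> mb B (imF psi t) ->
  (forall k, (k < 4)%N -> mb B (pdf k (reF psi) t) /\ mb B (pdf k (imF psi) t)) ->
  mb B (phi t) ->
  mb B (edens c m q G1 chi a phi psi t) /\ mb B (conc_dens c m G1 chi a psi t).
Proof.
move=> hG a0 hr hi hk hp.
have mN0 : mb B (fun x => cnorm2 (psi t x)) := mb_add (mb_sq hr) (mb_sq hi).
have mC : forall k, (k < 4)%N -> mb B (fun x => cnorm2 (cpd k psi t x)).
  by move=> k /hk [h1 h2]; exact: (mb_add (mb_sq h1) (mb_sq h2)).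
have mGa : mb B (fun x => Ga G1 a (cnorm2 (psi t x))).
  apply: (mb_mul (mb_cst B (a ^-5))).
  apply: (mb_G1 _ _ _ _ _ hG mN0) => [x _|]; first exact: cnorm2_ge0.
  by rewrite exprn_ge0 // ltW.
have mgrad : mb B (fun x => grad_sq psi t x).
  exact: (mb_add (mb_add (mC 1%N isT) (mC 2%N isT)) (mC 3%N isT)).
have [h0r h0i] := hk 0%N isT.
have mcov : mb B (fun x => cnorm2 (covdt q chi phi psi t x)).
  apply: (mb_eq _ _ (mb_add
    (mb_sq (mb_add h0r (mb_opp (mb_mul (mb_mul (mb_mul (mb_cst B q) hp) (mb_cst B chi^-1)) hi))))
    (mb_sq (mb_add h0i (mb_mul (mb_mul (mb_mul (mb_cst B q) hp) (mb_cst B chi^-1)) hr))))).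
  by move=> x _; rewrite cnorm2_covdt.
split.
  exact: (mb_mul (mb_cst B (chi ^+ 2 / (2 * m)))
    (mb_add (mb_add (mb_add (mb_mul (mb_cst B (c ^-2)) mcov) mgrad) mGa)
      (mb_mul (mb_cst B ((m * c / chi) ^+ 2)) mN0))).
exact: (mb_add (mb_add (mb_mul (mb_cst B ((chi / (m * c)) ^+ 2))
          (mb_add (mb_mul (mb_cst B (c ^-2)) (mC 0%N isT)) mgrad))
        (mb_mul (mb_cst B ((chi / (m * c)) ^+ 2)) (mb_abs mGa))) mN0).
Qed.

Lemma alg_bound {R : realType} (c m q chi C ph pr pi r i Ng Gv : R) :
  0 < c -> 0 < m -> 0 < chi -> `|ph| <= C -> 0 <= Ng ->
  `| chi ^+ 2 / (2 * m) * (c ^-2 * ((pr - q * ph / chi * i) ^+ 2 + (pi + q * ph / chi * r) ^+ 2)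
      + Ng + Gv + (m * c / chi) ^+ 2 * (r ^+ 2 + i ^+ 2)) |
  <= (m * c ^+ 2 + q ^+ 2 * C ^+ 2 / (m * c ^+ 2)) *
     ((chi / (m * c)) ^+ 2 * (c ^-2 * (pr ^+ 2 + pi ^+ 2) + Ng)
      + (chi / (m * c)) ^+ 2 * `|Gv| + (r ^+ 2 + i ^+ 2)).
Proof.
move=> c0 m0 chi0 hph Ng0.
set s := q * ph / chi.
set N0 := r ^+ 2 + i ^+ 2.
set Np := pr ^+ 2 + pi ^+ 2.
set Ncov := (pr - s * i) ^+ 2 + (pi + s * r) ^+ 2.
set w := chi ^+ 2 / (2 * m).
set K := m * c ^+ 2 + q ^+ 2 * C ^+ 2 / (m * c ^+ 2).
set A := chi / (m * c).
have cn : c != 0 by rewrite gt_eqF.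
have mn : m != 0 by rewrite gt_eqF.
have chin : chi != 0 by rewrite gt_eqF.
have N00 : 0 <= N0 by rewrite /N0 addr_ge0 // sqr_ge0.
have Np0 : 0 <= Np by rewrite /Np addr_ge0 // sqr_ge0.
have Ncov0 : 0 <= Ncov by rewrite /Ncov addr_ge0 // sqr_ge0.
have w0 : 0 < w by rewrite /w divr_gt0 // ?exprn_gt0 // mulr_gt0.
have c2 : 0 < c ^-2 by rewrite invr_gt0 exprn_gt0.
have hcov : Ncov <= 2 * Np + 2 * s ^+ 2 * N0.
  have e : 2 * Np + 2 * s ^+ 2 * N0 - Ncov = (pr + s * i) ^+ 2 + (pi - s * r) ^+ 2.
    by rewrite /Np /N0 /Ncov; ring.
  have : 0 <= (pr + s * i) ^+ 2 + (pi - s * r) ^+ 2 by rewrite addr_ge0 // sqr_ge0.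
  rewrite -e; lra.
have k0 : 0 <= (m * c / chi) ^+ 2 by exact: sqr_ge0.
have step1 : `| w * (c ^-2 * Ncov + Ng + Gv + (m * c / chi) ^+ 2 * N0) |
    <= w * (c ^-2 * (2 * Np + 2 * s ^+ 2 * N0) + Ng + `|Gv| + (m * c / chi) ^+ 2 * N0).
  rewrite normrM (gtr0_norm w0); apply: ler_wpM2l; first exact: ltW.
  have X0 : 0 <= c ^-2 * Ncov + Ng by rewrite addr_ge0 // mulr_ge0 // ltW.
  have Y0 : 0 <= (m * c / chi) ^+ 2 * N0 by rewrite mulr_ge0.
  apply: le_trans (ler_normD _ _) _; rewrite (ger0_norm Y0).
  apply: lerD => //; apply: le_trans (ler_normD _ _) _; rewrite (ger0_norm X0).
  apply: lerD => //; apply: lerD => //; apply: ler_wpM2l; [exact: ltW|exact: hcov].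
apply: le_trans step1 _.
set alpha := chi ^+ 2 / (m * c ^+ 2).
set beta := q ^+ 2 * C ^+ 2 / (m * c ^+ 2).
have e1 : w * (c ^-2 * (2 * Np + 2 * s ^+ 2 * N0) + Ng + `|Gv| + (m * c / chi) ^+ 2 * N0)
   = alpha * Np + w * Ng + w * `|Gv| + (q ^+ 2 * ph ^+ 2 / (m * c ^+ 2) + m * c ^+ 2 / 2) * N0.
  by rewrite /w /alpha /s; field; rewrite ?cn ?mn ?chin.
have e2 : K * (A ^+ 2 * (c ^-2 * Np + Ng) + A ^+ 2 * `|Gv| + N0)
   = (K * A ^+ 2 * c ^-2) * Np + (K * A ^+ 2) * Ng + (K * A ^+ 2) * `|Gv| + K * N0.
  by ring.
rewrite e1 e2.
have beta0 : 0 <= beta.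
  rewrite /beta; apply: divr_ge0; first by apply: mulr_ge0; exact: sqr_ge0.
  by apply: mulr_ge0; [exact: ltW|exact: sqr_ge0].
have A20 : 0 <= A ^+ 2 by exact: sqr_ge0.
have i1 : alpha <= K * A ^+ 2 * c ^-2.
  have -> : K * A ^+ 2 * c ^-2 = alpha + beta * A ^+ 2 * c ^-2.
    by rewrite /K /A /alpha /beta; field; rewrite ?cn ?mn ?chin.
  by rewrite lerDl; apply: mulr_ge0; [exact: mulr_ge0|exact: ltW].

have i2 : w <= K * A ^+ 2.
  have -> : K * A ^+ 2 = w + (w + beta * A ^+ 2).
    by rewrite /K /A /w /beta; field; rewrite ?cn ?mn ?chin.
  by rewrite lerDl; apply: addr_ge0; [exact: ltW|exact: mulr_ge0].
have i3 : q ^+ 2 * ph ^+ 2 / (m * c ^+ 2) + m * c ^+ 2 / 2 <= K.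
  have hp2 : ph ^+ 2 <= C ^+ 2.
    have : `|ph| ^+ 2 <= C ^+ 2 by have := normr_ge0 ph; nra.
    by rewrite real_normK // num_real.
  have mc0 : 0 < m * c ^+ 2 by rewrite mulr_gt0 // exprn_gt0.
  have : q ^+ 2 * ph ^+ 2 / (m * c ^+ 2) <= q ^+ 2 * C ^+ 2 / (m * c ^+ 2).
    rewrite ler_pM2r; last by rewrite invr_gt0.
    by apply: ler_wpM2l => //; exact: sqr_ge0.
  rewrite /K; lra.
apply: lerD; [apply: lerD; [apply: lerD|]|].
- by apply: ler_wpM2r.
- by apply: ler_wpM2r.
- by apply: ler_wpM2r.
- by apply: ler_wpM2r.
Qed.

Lemma dens_bound {R : realType} (c m q chi a C : R) (G1 : R -> R)
  (phi : R -> R3 R -> R) (psi : R -> R3 R -> R[i]) t x :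
  0 < c -> 0 < m -> 0 < chi -> `|phi t x| <= C ->
  `|edens c m q G1 chi a phi psi t x| <=
  (m * c ^+ 2 + q ^+ 2 * C ^+ 2 / (m * c ^+ 2)) * conc_dens c m G1 chi a psi t x.
Proof.
move=> c0 m0 chi0 hp.
rewrite /edens /conc_dens /grad0_sq /= cnorm2_covdt.
apply: alg_bound => //.
by apply: addr_ge0; [apply: addr_ge0|]; exact: cnorm2_ge0.
Qed.

Lemma ergo_bound {R : realType} (B : set (R3 R)) (e g pr : R3 R -> R) (r0 : R3 R)
  (rad K C c0 : R) :
  measurable B -> (leb3 B < +oo)%E -> mb B e -> mb B g -> mb B pr ->
  (forall x, B x -> `|e x| <= K * g x) -> (forall x, B x -> `|pr x - pr r0| <= rad) ->
  vint3 B g <= C -> 0 < c0 -> c0 <= vint3 B e -> 0 <= K -> 0 <= rad ->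
  `| (vint3 B e)^-1 * vint3 B (fun x => pr x * e x) - pr r0 | <= rad * K * `|C| / c0.
Proof.
move=> mB fB me mg mp heg hpr hgC c00 hE K0 rad0.
set E := vint3 B e.
have E0 : 0 < E by exact: lt_le_trans hE.
have ie := mb_int mB fB me.
have ig := mb_int mB fB mg.
have ip := mb_int mB fB (mb_mul mp me).
have ic := mb_int mB fB (mb_mul (mb_cst B (pr r0)) me).
have ih := mb_int mB fB (mb_mul (mb_add mp (mb_opp (mb_cst B (pr r0)))) me).
have eq1 : vint3 B (fun x => pr x * e x) - pr r0 * E =
    vint3 B (fun x => (pr x - pr r0) * e x).
  rewrite /vint3 /E /vint3 -RintegralZl // -RintegralB //.
  by apply: eq_Rintegral => x _; ring.
have eq2 : E^-1 * vint3 B (fun x => pr x * e x) - pr r0 =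
    E^-1 * vint3 B (fun x => (pr x - pr r0) * e x).
  by rewrite -eq1; field; rewrite gt_eqF.
rewrite eq2 normrM (gtr0_norm (_ : 0 < E^-1)) ?invr_gt0 //.
have h1 : `|vint3 B (fun x => (pr x - pr r0) * e x)| <= rad * K * `|C|.
  have hh := @le_normr_Rintegral _ _ _ (@leb3 R) B _ mB ih.
  rewrite /vint3; apply: le_trans hh _.
  have igK := mb_int mB fB (mb_mul (mb_cst B (rad * K)) mg).
  have iha := mb_int mB fB (mb_abs (mb_mul (mb_add mp (mb_opp (mb_cst B (pr r0)))) me)).
  have pw : forall x, B x -> `|(pr x - pr r0) * e x| <= rad * K * g x.
    move=> x Bx /=; rewrite normrM -mulrA.
    apply: ler_pM => //; [exact: hpr|exact: heg].
  have hh2 := @le_Rintegral _ _ _ (@leb3 R) B _ _ mB iha igK pw.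
  apply: le_trans hh2 _.
  rewrite /vint3 RintegralZl // -!mulrA; apply: ler_wpM2l => //.
  apply: ler_wpM2l => //; apply: le_trans hgC _; exact: ler_norm.
rewrite mulrC; apply: le_trans (ler_wpM2r _ h1) _.
  by rewrite invr_ge0 ltW.
rewrite ler_wpM2l //; first by rewrite !mulr_ge0.
by rewrite lef_pV2 ?posrE.
Qed.

Lemma norm3_le {R : realType} (v : R3 R) (D : R) :
  `|x1 v| <= D -> `|x2 v| <= D -> `|x3 v| <= D -> norm3 v <= 3 * D.
Proof.
move=> h1 h2 h3.
have D0 : 0 <= D by exact: le_trans (normr_ge0 _) h1.
rewrite /norm3 -(ger0_norm (_ : 0 <= 3 * D)); last by rewrite mulr_ge0.
rewrite -sqrtr_sqr; apply: ler_wsqrtr; rewrite /dot3.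
have := normr_ge0 (x1 v); have := normr_ge0 (x2 v); have := normr_ge0 (x3 v).
rewrite -[x1 v * x1 v]expr2 -[x2 v * x2 v]expr2 -[x3 v * x3 v]expr2.
rewrite -(real_normK (num_real (x1 v))) -(real_normK (num_real (x2 v))).
rewrite -(real_normK (num_real (x3 v))).
nra.
Qed.

Lemma wc_x1 {R : realType} (B : set (R3 R)) : wc B x1.
Proof. by move=> x _ e e0; exists e => // y _ [[h _] _]. Qed.
Lemma wc_x2 {R : realType} (B : set (R3 R)) : wc B x2.
Proof. by move=> x _ e e0; exists e => // y _ [[_ h] _]. Qed.
Lemma wc_x3 {R : realType} (B : set (R3 R)) : wc B x3.
Proof. by move=> x _ e e0; exists e => // y _ [_ h]. Qed.

Lemma per_n {R : realType} (c m q : R) (G1 dG1 : R -> R) (Tm Tp : R) (rh : R -> R3 R)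
  (chi a Rn : R) (phi : R -> R3 R -> R) (psi : R -> R3 R -> R[i]) (C c0 t : R) :
  0 < c -> 0 < m -> G1_hyp G1 dG1 -> 0 < a -> 0 < chi -> 0 <= Rn ->
  C2_on (tube Tm Tp rh Rn) phi ->
  (forall t x, tube Tm Tp rh Rn (t, x) -> `|phi t x| + grad0_norm c phi t x <= C) ->
  cC2_on (tube Tm Tp rh Rn) psi ->
  vint3 (cball3 (rh t) Rn) (conc_dens c m G1 chi a psi t) <= C ->
  0 < c0 -> c0 <= Ebar c m q G1 chi a phi psi rh Rn t ->
  Tm <= t <= Tp ->
  norm3 (sub3 (ergocenter c m q G1 chi a phi psi rh Rn t) (rh t)) <=
  3 * (Rn * (m * c ^+ 2 + q ^+ 2 * C ^+ 2 / (m * c ^+ 2)) * `|C| / c0).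
Proof.
move=> hc hm hG a0 chi0 Rn0 hphi hphiC hpsi hgC c00 hE ht.
set B := cball3 (rh t) Rn.
have mB : measurable B := cball3_measurable _ _.
have fB : (leb3 B < +oo)%E := cball3_fin _ _.
have cB : compact B := cball3_compact _ _.
case: hpsi => [[[cr hr] _] [[ci hi] _]].
have mr : mb B (reF psi t) := mb_wc B _ mB cB (@slice_wc _ Tm Tp rh Rn (reF psi) t cr ht).
have mi : mb B (imF psi t) := mb_wc B _ mB cB (@slice_wc _ Tm Tp rh Rn (imF psi) t ci ht).
have hk : forall k, (k < 4)%N -> mb B (pdf k (reF psi) t) /\ mb B (pdf k (imF psi) t).
  move=> k hk; have [_ c1] := hr k hk; have [_ c2] := hi k hk; split.
  - exact: (mb_wc B _ mB cB (@slice_wc _ Tm Tp rh Rn (pdf k (reF psi)) t c1 ht)).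
  - exact: (mb_wc B _ mB cB (@slice_wc _ Tm Tp rh Rn (pdf k (imF psi)) t c2 ht)).
case: hphi => [[cp _] _].
have mp : mb B (phi t) := mb_wc B _ mB cB (@slice_wc _ Tm Tp rh Rn phi t cp ht).
have [mE mg] := mb_dens c m q chi a G1 dG1 phi psi t B hG a0 mr mi hk mp.
set K := m * c ^+ 2 + q ^+ 2 * C ^+ 2 / (m * c ^+ 2).
have heg : forall x, B x -> `|edens c m q G1 chi a phi psi t x| <=
    K * conc_dens c m G1 chi a psi t x.
  move=> x Bx; apply: dens_bound => //.
  have := hphiC t x (conj ht Bx).
  have : 0 <= grad0_norm c phi t x by exact: sqrtr_ge0.
  lra.
have K0 : 0 <= K.
  have c2 : 0 <= c ^+ 2 := sqr_ge0 c.
  have q2 : 0 <= q ^+ 2 := sqr_ge0 q.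
  have C2 : 0 <= C ^+ 2 := sqr_ge0 C.
  rewrite /K; apply: addr_ge0; first by apply: mulr_ge0 => //; exact: ltW.
  apply: divr_ge0; first exact: mulr_ge0.
  by apply: mulr_ge0 => //; exact: ltW.
have hco : forall x, B x ->
    `|x1 x - x1 (rh t)| <= Rn /\ `|x2 x - x2 (rh t)| <= Rn /\ `|x3 x - x3 (rh t)| <= Rn.
  move=> x Bx; have [h1 [h2 h3]] := coord_le_norm3 (sub3 x (rh t)).
  have hx : norm3 (sub3 x (rh t)) <= Rn := Bx.
  split; [|split]; [exact: le_trans h1 hx|exact: le_trans h2 hx|exact: le_trans h3 hx].
apply: norm3_le; rewrite /sub3 /ergocenter /Ebar /x1 /x2 /x3 /=.
- apply: (@ergo_bound _ B _ _ (fun x => x.1.1) (rh t) Rn K C c0 mB fB mE mg (mb_wc B _ mB cB (wc_x1 B))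
     heg _ hgC c00 hE K0 Rn0).
  by move=> x Bx; have [] := hco x Bx.
- apply: (@ergo_bound _ B _ _ (fun x => x.1.2) (rh t) Rn K C c0 mB fB mE mg (mb_wc B _ mB cB (wc_x2 B))
     heg _ hgC c00 hE K0 Rn0).
  by move=> x Bx; have [_ []] := hco x Bx.
- apply: (@ergo_bound _ B _ _ (fun x => x.2) (rh t) Rn K C c0 mB fB mE mg (mb_wc B _ mB cB (wc_x3 B))
     heg _ hgC c00 hE K0 Rn0).
  by move=> x Bx; have [_ []] := hco x Bx.
Qed.
Theorem lemma2 (R : realType) (c m q : R) (G1 dG1 : R -> R) (Tm Tp : R)
  (rh : R -> R3 R) (a chi Rn : nat -> R)
  (phi : nat -> R -> R3 R -> R) (psi : nat -> R -> R3 R -> R[i])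
  (phi0 : R -> R) (gphi : R -> R3 R) (C : R) :
  (* constants and nonlinearity *)
  0 < c -> 0 < m -> G1_hyp G1 dG1 ->
  (* the trajectory *)
  vC2_on Tm Tp rh ->
  (forall t, Tm <= t <= Tp ->
     norm3 (vder rh t) <= C /\ norm3 (vder (vder rh) t) <= C) ->
  (* localized KG equations: parameters *)
  (forall n, 0 < a n /\ 0 < chi n /\ 0 < Rn n) ->
  Rn @ \oo --> 0 -> a @ \oo --> 0 -> chi @ \oo --> 0 ->
  (forall n, (chi n / (m * c)) / a n <= C) ->
  (forall M : R, \forall n \near \oo, M <= Rn n / a n) ->
  (* the potentials phi_n and their limit phi_inf *)
  (forall n, C2_on (tube Tm Tp rh (Rn n)) (phi n)) ->
  (forall n t x, tube Tm Tp rh (Rn n) (t, x) ->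
     `|phi n t x| + grad0_norm c (phi n) t x <= C) ->
  (forall t, Tm <= t <= Tp -> derivable phi0 t 1 /\ vderivable gphi t) ->
  (forall t, Tm <= t <= Tp ->
     `|phi0 t| <= C /\ norm3 (gphi t) <= C /\ norm3 (vder gphi t) <= C) ->
  (forall e : R, 0 < e -> \forall n \near \oo, forall t x,
     tube Tm Tp rh (Rn n) (t, x) ->
     `|phi n t x - phi_inf rh phi0 gphi t x|
     + grad0_norm c (fun s y => phi n s y - phi_inf rh phi0 gphi s y) t x <= e) ->
  (* concentrating solutions psi_n *)
  (forall n, cC2_on (tube Tm Tp rh (Rn n)) (psi n)) ->
  (forall n t x, tube Tm Tp rh (Rn n) (t, x) ->
     KG_op c m q dG1 (chi n) (a n) (phi n) (psi n) t x = 0) ->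
  (* (i) *)
  (forall n t, Tm <= t <= Tp ->
     vint3 (cball3 (rh t) (Rn n)) (conc_dens c m G1 (chi n) (a n) (psi n) t) <= C) ->
  (* (ii) *)
  (forall e : R, 0 < e -> \forall n \near \oo, forall t, Tm <= t <= Tp ->
     sint3 (rh t) (Rn n) (conc_dens c m G1 (chi n) (a n) (psi n) t) <= e) ->
  (* (iii) *)
  (exists c0 : R, 0 < c0 /\ exists n0 : nat, forall n, (n0 <= n)%N ->
     forall t, Tm <= t <= Tp ->
       c0 <= Ebar c m q G1 (chi n) (a n) (phi n) (psi n) rh (Rn n) t) ->
  (* (iv) *)
  (exists t0 : R, Tm <= t0 <= Tp /\
     cvg ((fun n => Ebar c m q G1 (chi n) (a n) (phi n) (psi n) rh (Rn n) t0) @ \oo)) ->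
  (* conclusion: r_n -> rh uniformly on [T-,T+] *)
  forall e : R, 0 < e -> \forall n \near \oo, forall t, Tm <= t <= Tp ->
    norm3 (sub3 (ergocenter c m q G1 (chi n) (a n) (phi n) (psi n) rh (Rn n) t) (rh t))
      <= e.
Proof.
move=> hc hm hG hrh hrhC hpos hRn ha hchi haC hRa hphiC2 hphiC hphi0 hphi0C hphilim
  hpsiC2 hKG hi hii [c0 [c00 [n0 hiii]]] hiv e e0.
set K := m * c ^+ 2 + q ^+ 2 * C ^+ 2 / (m * c ^+ 2).
have K0 : 0 <= K.
  have c2 : 0 <= c ^+ 2 := sqr_ge0 c.
  have q2 : 0 <= q ^+ 2 := sqr_ge0 q.
  have C2 : 0 <= C ^+ 2 := sqr_ge0 C.
  rewrite /K; apply: addr_ge0; first by apply: mulr_ge0 => //; exact: ltW.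
  apply: divr_ge0; first exact: mulr_ge0.
  by apply: mulr_ge0 => //; exact: ltW.
set L := K * `|C| + 1.
have KC0 : 0 <= K * `|C| by rewrite mulr_ge0.
have L0 : 0 < L by rewrite /L; lra.
set d := e * c0 / (3 * L).
have d0 : 0 < d by rewrite /d divr_gt0 ?mulr_gt0.
have hR := (@cvgrPdist_le _ _ _ _ _ Rn 0).1 hRn d d0.
near=> n.
have hn : (n0 <= n)%N by near: n; exact: nbhs_infty_ge.
have hRd : `|0 - Rn n| <= d by near: n; exact: hR.
move=> t ht.
have [a0 [chi0 Rn0]] := hpos n.
apply: le_trans (per_n c m q G1 dG1 Tm Tp rh (chi n) (a n) (Rn n) (phi n) (psi n) C c0 t hc hm hG a0 chi0 (ltW Rn0) (hphiC2 n) (hphiC n) (hpsiC2 n)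
  (hi n t ht) c00 (hiii n hn t ht) ht) _.
rewrite -/K.
have hRd' : Rn n <= d by move: hRd; rewrite sub0r normrN ger0_norm // ltW.
have h1 : Rn n * (K * `|C|) <= d * L.
  apply: ler_pM => //; [exact: ltW|rewrite /L; lra].
have -> : 3 * (Rn n * K * `|C| / c0) = 3 / c0 * (Rn n * (K * `|C|)) by field; rewrite gt_eqF.
apply: le_trans (ler_wpM2l _ h1) _; first by rewrite divr_ge0 // ltW.
rewrite /d le_eqVlt; apply/orP; left; apply/eqP; field.
by rewrite !gt_eqF.
Unshelve. all: by end_near.
Qed.
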